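(* Let $A\in\mathbb{C}^{m\times n}$ have rank $r>0$ with $\mathrm{rank}(A^{\sim}A)=\mathrm{rank}(A)$, and let $A=BC$ be a full rank factorization of $A$, where $B\in\mathbb{C}^{m\times r}$ and $C\in\mathbb{C}^{r\times n}$ both have rank $r$. Then $$A\{1,2,3^{\mathfrak{m}}\}=\left\{C_R^{-1}(B^{\sim}B)^{-1}B^{\sim} : C_R^{-1}\in\mathbb{C}^{n\times r} \text{ is a right inverse of } C\right\}.$$
   Context: For a positive integer $k$, the Minkowski metric matrix of order $k$ is $G_k=\mathrm{diag}(1,-I_{k-1})$ (with $G_1=(1)$). For $A\in\mathbb{C}^{m\times n}$, the Minkowski adjoint is $A^{\sim}=G_nA^*G_m$, where $A^*$ is the conjugate transpose. For $A\in\mathbb{C}^{m\times n}$ and $X\in\mathbb{C}^{n\times m}$ consider the equations $(1)\ AXA=A$, $(2)\ XAX=X$, $(3^{\mathfrak{m}})\ (AX)^{\sim}=AX$, $(4^{\mathfrak{m}})\ (XA)^{\sim}=XA$; $A\{i,\dots,k\}$ denotes the set of all $X$ satisfying the listed equations. A right inverse of $C$ is a matrix $C_R^{-1}$ with $CC_R^{-1}=I_r$. *)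

(* Defs.v *)
From HB Require Import structures.
From mathcomp Require Import all_boot all_order all_algebra.
From mathcomp Require Import complex.
From mathcomp Require Import reals.
Set Implicit Arguments. Unset Strict Implicit. Unset Printing Implicit Defensive.
Import Order.TTheory GRing.Theory Num.Theory.
Local Open Scope ring_scope.
Local Open Scope complex_scope.

Definition minkG (F : ringType) (k : nat) : 'M[F]_k :=
  diag_mx (\row_(i < k) (if val i == 0%N then 1 else -1)).

Definition conjT (F : numClosedFieldType) (m n : nat) (A : 'M[F]_(m, n)) : 'M[F]_(n, m) :=
  map_mx Num.conj A^T.

(* Minkowski adjoint A^~ = G_n A^* G_m *)
Definition madj (F : numClosedFieldType) (m n : nat) (A : 'M[F]_(m, n)) : 'M[F]_(n, m) :=
  minkG F n *m conjT A *m minkG F m.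

Definition in_A123m (F : numClosedFieldType) (m n : nat)
    (A : 'M[F]_(m, n)) (X : 'M[F]_(n, m)) : Prop :=
  [/\ A *m X *m A = A, X *m A *m X = X & madj (A *m X) = A *m X].

(* Main.v *)
Require Import Defs.
From HB Require Import structures.
From mathcomp Require Import all_boot all_order all_algebra.
From mathcomp Require Import complex.
From mathcomp Require Import reals.
Import Order.TTheory GRing.Theory Num.Theory.
Local Open Scope ring_scope.
Local Open Scope complex_scope.

Section H.
Variable F : numClosedFieldType.

Lemma minkGG k : minkG F k *m minkG F k = 1%:M.
Proof.
apply/matrixP=> a b; rewrite /minkG mul_diag_mx !mxE.
have [->|_] := eqVneq a b; last by rewrite mulr0n mulr0.
by rewrite !mulr1n; case: ifP => _; rewrite ?mulr1 ?mulrNN ?mulr1.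
Qed.

Lemma conjTM m n p (A : 'M[F]_(m, n)) (B : 'M[F]_(n, p)) :
  conjT (A *m B) = conjT B *m conjT A.
Proof. by rewrite /conjT trmx_mul map_mxM. Qed.

Lemma conjTK m n (A : 'M[F]_(m, n)) : conjT (conjT A) = A.
Proof. by apply/matrixP=> a b; rewrite /conjT !mxE conjCK. Qed.

Lemma conjT1 n : conjT (1%:M : 'M[F]_n) = 1%:M.
Proof. by apply/matrixP=> a b; rewrite /conjT !mxE rmorph_nat eq_sym. Qed.

Lemma madjM m n p (A : 'M[F]_(m, n)) (B : 'M[F]_(n, p)) :
  madj (A *m B) = madj B *m madj A.
Proof.
rewrite /madj conjTM !mulmxA; congr (_ *m _).
by rewrite -!mulmxA (mulmxA (minkG F n)) minkGG mul1mx.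
Qed.

Lemma madjK m n (A : 'M[F]_(m, n)) : madj (madj A) = A.
Proof.
rewrite /madj !conjTM conjTK.
have hG k : conjT (minkG F k) = minkG F k.
  apply/matrixP=> a b; rewrite /conjT /minkG !mxE.
  have [->|_] := eqVneq a b; rewrite ?mulr0n ?conjC0 // ?mulr1n.
  by case: (_ == _); rewrite ?rmorphN rmorph1.
rewrite !hG !mulmxA minkGG mul1mx -!mulmxA minkGG mulmx1 //.
Qed.

Lemma madj1 n : madj (1%:M : 'M[F]_n) = 1%:M.
Proof. by rewrite /madj conjT1 mulmx1 minkGG. Qed.

End H.

Theorem theorem4p4 (R : realType) (m n r : nat)
    (A : 'M[R[i]]_(m, n)) (B : 'M[R[i]]_(m, r)) (C : 'M[R[i]]_(r, n)) :
  \rank A = r -> (0 < r)%N ->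
  \rank (madj A *m A) = \rank A ->
  A = B *m C -> \rank B = r -> \rank C = r ->
  forall X : 'M[R[i]]_(n, m),
    in_A123m A X <->
    exists CR : 'M[R[i]]_(n, r),
      C *m CR = 1%:M /\ X = CR *m invmx (madj B *m B) *m madj B.
Proof.
move=> rA _ rAA eA rB rC X.
set K := madj B *m B.
have Ku : K \in unitmx.
  rewrite -row_free_unit /row_free eqn_leq rank_leq_row /=.
  move: rAA; rewrite rA eA madjM => e.
  rewrite -{1}e; have -> : madj C *m madj B *m (B *m C) = madj C *m K *m C by rewrite /K !mulmxA.
  apply: leq_trans (mxrankM_maxl _ _) _.
  exact: mxrankM_maxr.
set M := invmx K.
have MK : M *m K = 1%:M by rewrite mulVmx.
have madjK1 : madj K = K by rewrite /K madjM madjK.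
have madjM' : madj M = M.
  have h : madj M *m K = 1%:M.
    by rewrite -madjK1 -madjM mulmxV // madj1.
  by rewrite -[madj M]mulmx1 -(mulmxV Ku) mulmxA h mul1mx.
have Cf : row_free C by rewrite /row_free rC.
split.
- case=> h1 h2 h3.
  exists (X *m B); split.
    apply: (row_free_inj Cf); rewrite /= mul1mx.
    have e1 p (Y : 'M_(r,p)) : M *m madj B *m (B *m Y) = Y.
      by rewrite mulmxA -(mulmxA M) -/K MK mul1mx.
    rewrite -[LHS]e1 -[RHS]e1 -eA; congr (_ *m _).
    by rewrite !mulmxA -eA -(mulmxA _ B C) -eA h1.
  have hX : X = X *m madj X *m madj C *m madj B.
    rewrite -{1}h2 -mulmxA -h3 eA !madjM !mulmxA //.
  set Z := X *m madj X *m madj C in hX.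
  rewrite {2}hX -(mulmxA Z) -/K -(mulmxA _ K) mulmxV // mulmx1 //.
- case=> CR [hC ->].
  have AX : A *m (CR *m M *m madj B) = B *m M *m madj B.
    by rewrite eA -!mulmxA (mulmxA C) hC mul1mx.
  split.
  + rewrite AX eA; move: MK; rewrite /M; move: (invmx K) => M' MK; rewrite /K in MK; move: (madj B) MK => Bt MK.
    by rewrite !mulmxA -(mulmxA (B *m M') Bt B) -(mulmxA B M') MK mulmx1.
  + rewrite -mulmxA AX; move: MK; rewrite /M; move: (invmx K) => M' MK; rewrite /K in MK; move: (madj B) MK => Bt MK.
    by rewrite !mulmxA -(mulmxA (CR *m M') Bt B) -(mulmxA CR M') MK mulmx1.
  + by rewrite AX (@madjM _ _ _ _ (B *m M) (madj B)) madjK (@madjM _ _ _ _ B M) madjM' mulmxA.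
Qed.
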